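(* Let $X$ be a compactum, let $n\geq2$, and let $f:X\to X$ be a function. Consider the statements: (1) $f$ is multi-transitive; (2) $F_n(f)$ is multi-transitive; (3) $SF_n(f)$ is multi-transitive. Then (2) and (3) are equivalent, and (2) implies (1).
   Context: A compactum is a nondegenerate compact, perfect, Hausdorff topological space. $F_n(X)$ is the set of nonempty subsets of $X$ with at most $n$ points, with the Vietoris topology; $F_1(X)=\{\{x\}:x\in X\}$; $F_n(f)(A)=f(A)$. $SF_n(X)=F_n(X)/F_1(X)$ is the quotient collapsing $F_1(X)$ to a point, $q$ the quotient map, $F_X=q(F_1(X))$, and $SF_n(f)(\chi)=q(F_n(f)(q^{-1}(\chi)))$ for $\chi\neq F_X$, $SF_n(f)(F_X)=F_X$. A function $g:Z\to Z$ is transitive if for all nonempty open $U,V\subseteq Z$ there is $k\in\mathbb{N}$ with $g^k(U)\cap V\neq\emptyset$; $g$ is multi-transitive if for every $m\in\mathbb{N}$ the product $g\times g^2\times\cdots\times g^m:Z^m\to Z^m$ is transitive. *)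

(* Defs.v *)
From HB Require Import structures.
From mathcomp Require Import all_boot all_order all_algebra.
From mathcomp Require Import all_classical all_reals all_analysis.
Unset Printing Implicit Defensive.
Local Open Scope classical_set_scope.

Definition compactum (X : topologicalType) : Prop :=
  [/\ (exists x y : X, x <> y), compact [set: X], perfect_set [set: X]
    & hausdorff_space X].

Definition transitive_for (Z : Type) (op : set (set Z)) (g : Z -> Z) : Prop :=
  forall U V : set Z, op U -> op V -> U !=set0 -> V !=set0 ->
    exists k : nat, (0 < k)%N /\ (iter k g @` U) `&` V !=set0.

Definition prod_open (Z : Type) (op : set (set Z)) (m : nat) :
    set (set ('I_m -> Z)) :=
  fun W => forall z, W z -> exists U : 'I_m -> set Z,
    [/\ forall i, op (U i), forall i, U i (z i) &
        [set w | forall i, U i (w i)] `<=` W].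

Definition prod_iter (Z : Type) (g : Z -> Z) (m : nat) :
    ('I_m -> Z) -> ('I_m -> Z) :=
  fun z i => iter (nat_of_ord i).+1 g (z i).

Definition multi_transitive_for (Z : Type) (op : set (set Z)) (g : Z -> Z) :=
  forall m : nat, (0 < m)%N -> transitive_for ('I_m -> Z) (prod_open Z op m) (prod_iter Z g m).

Section Hyper.
Variable X : topologicalType.

Definition isFn (n : nat) (A : set X) : Prop :=
  A !=set0 /\ exists s : seq X, (size s <= n)%N /\ A = [set` s].

Definition Fn (n : nat) := {A : set X | isFn n A}.

Definition vbox (n k : nat) (U : 'I_k -> set X) : set (Fn n) :=
  [set B | proj1_sig B `<=` \bigcup_(i in [set: 'I_k]) U i /\
           forall i, proj1_sig B `&` U i !=set0].

Definition Fn_open (n : nat) : set (set (Fn n)) :=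
  fun W => forall A, W A -> exists k (U : 'I_k -> set X),
    [/\ forall i, open (U i), vbox n k U A & vbox n k U `<=` W].

Lemma isFn_image (n : nat) (f : X -> X) (A : set X) :
  isFn n A -> isFn n (f @` A).
Proof.
move=> [[x Ax] [s [hs eA]]]; split; first by exists (f x); exists x.
exists (map f s); split; first by rewrite size_map.
subst A; apply/seteqP; split=> y /=.
- by case=> z zs <-; apply/mapP; exists z.
- by move=> /mapP [z zs ->]; exists z.
Qed.

Definition Fn_map (n : nat) (f : X -> X) (A : Fn n) : Fn n :=
  exist _ (f @` proj1_sig A) (isFn_image n f (proj1_sig A) (proj2_sig A)).

Definition is_singleton (n : nat) (A : Fn n) : Prop :=
  exists x : X, proj1_sig A = [set x].

(* ---- The quotient SF_n(X) = F_n(X)/F_1(X) ----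
   Modelled as option: None is the collapsed point F_X, and
   Some A corresponds to the (singleton) class of a non-singleton A. *)
Definition SFn (n : nat) := option {A : Fn n | ~ is_singleton n A}.

Definition FX (n : nat) : SFn n := None.

Definition qmap (n : nat) (A : Fn n) : SFn n :=
  match pselect (is_singleton n A) with
  | left _ => None
  | right h => Some (exist _ A h)
  end.

Definition SFn_open (n : nat) : set (set (SFn n)) :=
  fun W => Fn_open n (qmap n @^-1` W).

(* SF_n(f)(chi) = q(F_n(f)(q^{-1}(chi))) for chi <> F_X; SF_n(f)(F_X) = F_X.
   For chi = Some A, q^{-1}(chi) = {A}. *)
Definition SFn_map (n : nat) (f : X -> X) (chi : SFn n) : SFn n :=
  match chi with
  | None => FX n
  | Some A => qmap n (Fn_map n f (proj1_sig A))
  end.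

End Hyper.

(* Main.v *)
Require Import Defs.
From mathcomp Require Import all_boot all_order all_algebra.
From mathcomp Require Import all_classical all_reals all_analysis.
Local Open Scope classical_set_scope.

Lemma iter_rel (A B : Type) (R : A -> B -> Prop) (g : A -> A) (g' : B -> B) :
  (forall a b, R a b -> R (g a) (g' b)) ->
  forall k a b, R a b -> R (iter k g a) (iter k g' b).
Proof. by move=> H; elim=> [//|k IH] a b /IH /H. Qed.

Lemma prod_iter_rel (A B : Type) (r : A -> B -> Prop) (g : A -> A) (g' : B -> B)
  (m : nat) :
  (forall a b, r a b -> r (g a) (g' b)) ->
  forall k (z : 'I_m -> A) (w : 'I_m -> B), (forall i, r (z i) (w i)) ->
  forall i, r (iter k (prod_iter A g m) z i) (iter k (prod_iter B g' m) w i).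
Proof.
move=> H k z w zw.
apply: (@iter_rel _ _ (fun z w => forall i, r (z i) (w i))) => // z' w' h i.
exact: (@iter_rel _ _ r g g' H _ _ _ (h i)).
Qed.

Section S.
Variables (X : topologicalType) (n : nat).

Definition vboxI {I : finType} (U : I -> set X) : set (Fn X n) :=
  [set B | proj1_sig B `<=` \bigcup_(i in [set: I]) U i /\
           forall i, proj1_sig B `&` U i !=set0].

Lemma vboxI_open (I : finType) (U : I -> set X) :
  (forall i, open (U i)) -> Fn_open X n (vboxI U).
Proof.
move=> oU A hA; exists #|I|, (fun j => U (enum_val j)).
have E : vbox X n #|I| (fun j => U (enum_val j)) = vboxI U.
  apply/seteqP; split=> B [h1 h2]; split.
  - by move=> x /h1 [j _ Ux]; exists (enum_val j).
  - by move=> i; rewrite -(enum_rankK i); apply: h2.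
  - by move=> x /h1 [i _ Ux]; exists (enum_rank i) => //; rewrite enum_rankK.
  - by move=> j; apply: h2.
by rewrite E; split.
Qed.

End S.

Lemma two_points (X : topologicalType) (n : nat) (k : nat) (U : 'I_k -> set X)
  (A : Fn X n) :
  perfect_set [set: X] -> (2 <= n)%N -> (forall i, open (U i)) ->
  vbox X n k U A ->
  exists B a y, [/\ vbox X n k U B, proj1_sig B a, proj1_sig B y & a <> y].
Proof.
move=> [_ hperf] n2 oU [vA1 vA2].
have [a Aa] : proj1_sig A !=set0 by case: (proj2_sig A).
case: (pselect (exists y, proj1_sig A y /\ y <> a)) => [[y [Ay ya]]|hno].
  exists A, a, y; split => //; last by move=> e; apply: ya; rewrite e.
have Ua : forall i, U i a.
  move=> i; have [x [Ax Ux]] := vA2 i.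
  case: (pselect (x = a)) => [<-//|xa]; by exfalso; apply: hno; exists x.
have nb : nbhs a (fun x => forall i, U i x).
  by apply: filter_forall => i; apply: open_nbhs_nbhs; split.
have : limit_point [set: X] a by rewrite hperf.
move=> /(_ _ nb) [y [/eqP ya _ Uy]].
have hB : isFn X n [set` [:: a; y]].
  split; first by exists a; rewrite /= inE eqxx.
  by exists [:: a; y]; split.
have [j _ Uja] := vA1 a Aa.
exists (exist _ _ hB), a, y; split => //=.
- split => /=.
  + move=> x; rewrite /= !inE => /orP [/eqP->|/eqP->]; exists j => //.
  + by move=> i; exists a; split => //=; rewrite !inE eqxx.
- by rewrite !inE eqxx.
- by rewrite !inE eqxx orbT.
- by move=> ay; apply: ya; rewrite ay.
Qed.

Lemma shrink (X : topologicalType) (n : nat) (W : set (Fn X n)) :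
  compactum X -> (2 <= n)%N -> Fn_open X n W -> W !=set0 ->
  exists W0, [/\ Fn_open X n W0, W0 !=set0, W0 `<=` W &
                 forall B, W0 B -> ~ is_singleton X n B].
Proof.
move=> [_ _ hperf hH] n2 oW [A WA].
have [k [U [oU vA sub]]] := oW A WA.
have [B [a [y [vB Ba By ay]]]] := @two_points X n k U A hperf n2 oU vA.
have [Va [Vy [oVa [oVy [Vaa [Vyy dis]]]]]] : exists Va Vy, open Va /\ open Vy /\
    Va a /\ Vy y /\ Va `&` Vy = set0.
  apply: contrapT => nH; apply: ay; apply: hH => A' B'.
  rewrite !nbhsE => -[A1 [oA1 A1a] sA1] [B1 [oB1 B1y] sB1].
  case: (pselect (A1 `&` B1 = set0)) => h.
    by exfalso; apply: nH; exists A1, B1.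
  have [x [xA xB]] : A1 `&` B1 !=set0 by apply/set0P; apply/eqP.
  by exists x; split; [apply: sA1|apply: sB1].
pose U' := fun j : 'I_k + bool => match j with
  | inl i => U i
  | inr b => (if b then Va else Vy) `&` \bigcup_(i in [set: 'I_k]) U i end.
have oU' : forall j, open (U' j).
  case=> [i|[] /=]; first exact: oU.
  - by apply: openI => //; apply: bigcup_open.
  - by apply: openI => //; apply: bigcup_open.
exists (vboxI X n U'); split.
- exact: vboxI_open.
- exists B; case: vB => vB1 vB2; split.
  + by move=> x /vB1 [i _ Ux]; exists (inl i).
  + case=> [i|[]]; first exact: vB2.
    * by exists a; split => //; split => //; apply: vB1.
    * by exists y; split => //; split => //; apply: vB1.
- move=> C [h1 h2]; apply: sub; split.
  + move=> x /h1 [[i|[]] _ /=]; first by exists i.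
    * by case.
    * by case.
  + by move=> i; apply: (h2 (inl i)).
- move=> C [_ h2] [x Cx].
  have [z [Cz [Vaz _]]] := h2 (inr true).
  have [z' [Cz' [Vyz' _]]] := h2 (inr false).
  rewrite Cx in Cz Cz'; rewrite /= in Cz Cz'; subst z z'.
  have : (Va `&` Vy) x by [].
  by rewrite dis.
Qed.

Lemma factor_trans (Z Z' : Type) (op : set (set Z)) (op' : set (set Z'))
  (h : Z -> Z') (g : Z -> Z) (g' : Z' -> Z') :
  (forall z, h (g z) = g' (h z)) -> (forall U, op' U -> op (h @^-1` U)) ->
  (forall z', exists z, h z = z') ->
  multi_transitive_for Z op g -> multi_transitive_for Z' op' g'.
Proof.
move=> hc hop hs mt m m0 U' V' oU' oV' [c Uc] [d Vd].
have PO : forall W', prod_open Z' op' m W' ->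
    prod_open Z op m [set z | W' (fun i => h (z i))].
  move=> W' oW' z /= Wz.
  have [Ui [oUi Uiz sUi]] := oW' _ Wz.
  exists (fun i => h @^-1` Ui i); split => //.
  - by move=> i; apply: hop.
  - by move=> w /= hw; apply: sUi.
have [pc hpc] := choice (fun i => hs (c i)).
have [pd hpd] := choice (fun i => hs (d i)).
have ne1 : [set z | U' (fun i => h (z i))] !=set0.
  by exists pc; rewrite /=; have -> : (fun i => h (pc i)) = c by apply: funext.
have ne2 : [set z | V' (fun i => h (z i))] !=set0.
  by exists pd; rewrite /=; have -> : (fun i => h (pd i)) = d by apply: funext.
have [k [k0 [y [[x Px <-] Py]]]] := mt m m0 _ _ (PO _ oU') (PO _ oV') ne1 ne2.
exists k; split => //; exists (fun i => h (iter k (prod_iter Z g m) x i)).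
split => //; exists (fun i => h (x i)) => //.
apply: funext => i.
symmetry; apply: (@prod_iter_rel _ _ (fun a b => h a = b) g g' m) => //.
by move=> a b <-.
Qed.

Lemma lift_trans (Z Z' : Type) (op : set (set Z)) (op' : set (set Z'))
  (h : Z -> Z') (g : Z -> Z) (g' : Z' -> Z') :
  (forall z, h (g z) = g' (h z)) ->
  (forall W, op W -> W !=set0 -> exists W0,
      [/\ W0 !=set0, op' (h @` W0) & h @^-1` (h @` W0) `<=` W]) ->
  multi_transitive_for Z' op' g' -> multi_transitive_for Z op g.
Proof.
move=> hc hsh mt m m0 U V oU oV [c Uc] [d Vd].
have BX : forall (W : set ('I_m -> Z)) c, prod_open Z op m W -> W c ->
   exists W0 : 'I_m -> set Z, [/\ forall i, W0 i !=set0,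
      forall i, op' (h @` W0 i) &
      forall w, (forall i, h (w i) \in h @` W0 i) -> W w].
  move=> W c' oW Wc.
  have [Ui [oUi Uic sUi]] := oW _ Wc.
  have [W0 hW0] := choice (fun i => hsh (Ui i) (oUi i) (ex_intro _ _ (Uic i))).
  exists W0; split.
  - by move=> i; case: (hW0 i).
  - by move=> i; case: (hW0 i).
  - move=> w hw; apply: sUi => i; case: (hW0 i) => _ _; apply.
    by move: (hw i); rewrite inE.
have [W0 [ne0 o0 s0]] := BX _ _ oU Uc.
have [W1 [ne1 o1 s1]] := BX _ _ oV Vd.
have PO : forall W0 : 'I_m -> set Z, (forall i, op' (h @` W0 i)) ->
    prod_open Z' op' m [set w | forall i, (h @` W0 i) (w i)].
  move=> W2 o2 w hw; exists (fun i => h @` W2 i); split => //.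
have NE : forall W0 : 'I_m -> set Z, (forall i, W0 i !=set0) ->
    [set w | forall i, (h @` W0 i) (w i)] !=set0.
  move=> W2 ne2; have [p hp] := choice ne2.
  by exists (fun i => h (p i)) => i; exists (p i).
have [k [k0 [y [[x Px <-] Py]]]] :=
  mt m m0 _ _ (PO _ o0) (PO _ o1) (NE _ ne0) (NE _ ne1).
have [p hp] : {p : 'I_m -> Z & forall i, W0 i (p i) /\ h (p i) = x i}.
  by apply: (@choice _ _ (fun i a => W0 i a /\ h a = x i)) => i; have [a ? ?] := Px i; exists a.
exists k; split => //; exists (iter k (prod_iter Z g m) p); split.
  exists p => //; apply: s0 => i; rewrite inE; case: (hp i) => ? _.
  by exists (p i).
apply: s1 => i; rewrite inE.
have -> : h (iter k (prod_iter Z g m) p i) = iter k (prod_iter Z' g' m) x i.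
  apply: (@prod_iter_rel _ _ (fun a b => h a = b) g g' m) => //.
  - by move=> a b <-.
  - by move=> j; case: (hp j).
exact: Py.
Qed.

Section Q.
Variables (X : topologicalType) (n : nat).

Lemma qmap_sing {B : Fn X n} : is_singleton X n B -> qmap X n B = None.
Proof. by rewrite /qmap; case: pselect. Qed.

Lemma qmap_ns {B : Fn X n} (h : ~ is_singleton X n B) :
  qmap X n B = Some (exist _ B h).
Proof.
rewrite /qmap; case: pselect => // h'.
by congr Some; congr exist; apply: Prop_irrelevance.
Qed.

Lemma q_comm (f : X -> X) (B : Fn X n) :
  qmap X n (Fn_map X n f B) = SFn_map X n f (qmap X n B).
Proof.
case: (pselect (is_singleton X n B)) => hs; last by rewrite (qmap_ns hs).
rewrite (qmap_sing hs) /=; apply: qmap_sing.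
case: hs => x hx; exists (f x); rewrite /= hx.
by rewrite image_set1.
Qed.

Lemma isFn_set1 (x : X) : (0 < n)%N -> isFn X n [set x].
Proof.
move=> n0; split; first by exists x.
exists [:: x]; split => //.
by apply/seteqP; split => y /=; rewrite inE => /eqP.
Qed.

Lemma q_surj : (0 < n)%N -> (exists x : X, True) ->
  forall chi, exists B, qmap X n B = chi.
Proof.
move=> n0 [x _] [[A hA]|].
  by exists A; apply: qmap_ns.
exists (exist _ _ (isFn_set1 x n0)); apply: qmap_sing; by exists x.
Qed.

Lemma q_lift (W : set (Fn X n)) : compactum X -> (2 <= n)%N ->
  Fn_open X n W -> W !=set0 -> exists W0,
  [/\ W0 !=set0, SFn_open X n (qmap X n @` W0) &
      qmap X n @^-1` (qmap X n @` W0) `<=` W].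
Proof.
move=> cX n2 oW neW.
have [W0 [oW0 ne0 s0 ns0]] := @shrink X n W cX n2 oW neW.
have E : qmap X n @^-1` (qmap X n @` W0) = W0.
  apply/seteqP; split => B; last by move=> WB; exists B.
  move=> [C WC]; rewrite (qmap_ns (ns0 C WC)) => e.
  case: (pselect (is_singleton X n B)) => hs; first by rewrite (qmap_sing hs) in e.
  by rewrite (qmap_ns hs) in e; case: e => <-.
exists W0; split => //; first by rewrite /SFn_open E.
by rewrite E.
Qed.

End Q.

Lemma F_to_X (X : topologicalType) (n : nat) (f : X -> X) : (0 < n)%N ->
  multi_transitive_for (Fn X n) (Fn_open X n) (Fn_map X n f) ->
  multi_transitive_for X (@open X) f.
Proof.
move=> n0 mt m m0 U V oU oV [c Uc] [d Vd].
have [Ui [oUi Uic sUi]] := oU _ Uc.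
have [Vi [oVi Vid sVi]] := oV _ Vd.
pose T (S : set X) := [set B : Fn X n | proj1_sig B `<=` S].
have oT : forall S, open S -> Fn_open X n (T S).
  move=> S oS B TB; exists 1, (fun _ => S); split => //.
  - split; first by move=> x Bx; exists ord0 => //; exact: TB.
    by move=> i; have [x Bx] := (proj2_sig B).1; exists x; split => //; apply: TB.
  - by move=> C [h1 _] x /h1 [].
have PO : forall S : 'I_m -> set X, (forall i, open (S i)) ->
    prod_open (Fn X n) (Fn_open X n) m [set Z | forall i, T (S i) (Z i)].
  by move=> S oS Z hZ; exists (fun i => T (S i)); split => // i; apply: oT.
have NE : forall (S : 'I_m -> set X) c, (forall i, S i (c i)) ->
    [set Z | forall i, T (S i) (Z i)] !=set0.
  move=> S c' hc; exists (fun i => exist _ _ (@isFn_set1 X n (c' i) n0)).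
  by move=> i x /= ->.
have [k [k0 [Y [[Z PZ <-] PY]]]] :=
  mt m m0 _ _ (PO _ oUi) (PO _ oVi) (NE _ _ Uic) (NE _ _ Vid).
have [p hp] := choice (fun i => (proj2_sig (Z i)).1).
exists k; split => //; exists (iter k (prod_iter X f m) p); split.
  by exists p => //; apply: sUi => i; apply: PZ; exact: hp i.
apply: sVi => i; apply: PY.
apply: (@prod_iter_rel _ _ (fun a B => proj1_sig B a) f (Fn_map X n f) m) => //.
by move=> a B Ba; exists a.
Qed.

Theorem theorem9 (X : topologicalType) (n : nat) (f : X -> X) :
  compactum X -> (2 <= n)%N ->
  (multi_transitive_for (Fn X n) (Fn_open X n) (Fn_map X n f) <->
   multi_transitive_for (SFn X n) (SFn_open X n) (SFn_map X n f)) /\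
  (multi_transitive_for (Fn X n) (Fn_open X n) (Fn_map X n f) ->
   multi_transitive_for X (@open X) f).
Proof.
move=> cX n2; have n0 : (0 < n)%N by apply: leq_trans n2.
have inh : exists x : X, True by case: cX => -[x [y _]] _ _ _; exists x.
split; [split|].
- apply: (@factor_trans _ _ _ _ (qmap X n) (Fn_map X n f) (SFn_map X n f)).
  + exact: q_comm.
  + by move=> U hU.
  + exact: q_surj.
- apply: (@lift_trans _ _ _ (SFn_open X n) (qmap X n)).
  + exact: q_comm.
  + by move=> W oW neW; apply: q_lift.
- exact: F_to_X.
Qed.
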